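(* In a non-degenerate RiFle assignment game, the set of all stable outcomes is a lattice under the partial order $\ge_P$ of $P$-preferences.
   Context: A RiFle assignment game consists of two disjoint sets of agents $P=\{p_1,\dots,p_n\}$ and $Q=\{q_1,\dots,q_n\}$, a pair of nonnegative real numbers $(\beta_{ij},\gamma_{ij})$ for every pair $(p_i,q_j)\in P\times Q$ (write $\alpha_{ij}=\beta_{ij}+\gamma_{ij}$), and a designation of every agent as rigid or flexible. Let $\mathcal R$ be the set of pairs with at least one rigid agent and $\mathcal F$ the set of pairs with both agents flexible. An outcome $(\bar u,\bar v;\mu)$ consists of a matching $\mu$ between $P$ and $Q$ (write $p_i\stackrel{\mu}{\longleftrightarrow} q_j$) and payoff vectors $\bar u,\bar v\in\mathbb R^n$. It is feasible if: (1) $u_i\ge0$, $v_j\ge0$; (2) if a rigid $p_i$ is matched to $q_j$ then $u_i=\beta_{ij}$ and, if $q_j$ is flexible, $v_j\ge\gamma_{ij}$; symmetrically for a rigid $q_j$ matched to $p_i$: $v_j=\gamma_{ij}$ and, if $p_i$ is flexible, $u_i\ge\beta_{ij}$; (3) $\sum_iu_i+\sum_jv_j=\sum_{p_i\stackrel{\mu}{\longleftrightarrow}q_j}\alpha_{ij}$. It is stable if feasible and $u_i+v_j\ge\alpha_{ij}$ for $(p_i,q_j)\in\mathcal F$ and ($u_i\ge\beta_{ij}$ or $v_j\ge\gamma_{ij}$) for $(p_i,q_j)\in\mathcal R$. Reservation prices are modeled by rigid dummy agents; for the following definition an agent left unmatched by a matching is regarded as matched to a rigid dummy agent (whose prescribed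 share $\beta$ or $\gamma$ for him is his reservation price). Given a coalition $C\subseteq P\cup Q$ and a matching $\mu$, the total payoff to $C$ under $\mu$ is forced if every pair matched under $\mu$ with one agent in $C$ and the other outside $C$ is rigid (contains a rigid agent); the forced payoff is then $\sum_{p_i\in C,\ p_i\stackrel{\mu}{\longleftrightarrow}q_j}\beta_{ij}+\sum_{q_j\in C,\ p_i\stackrel{\mu}{\longleftrightarrow}q_j}\gamma_{ij}$. The game is non-degenerate if for any two matchings $\mu,\mu'$: whenever $C$ is a minimal coalition such that the payoff to $C$ is forced under both $\mu$ and $\mu'$, and the two forced payoffs are equal, then $\mu$ and $\mu'$ coincide on $C$. For outcomes, $(\bar u,\bar v;\mu)\ge_P(\bar u',\bar v';\mu')$ means $\bar u\ge\bar u'$ and $\bar v\le\bar v'$ componentwise. *)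

(* Defs.v *)
From HB Require Import structures.
From mathcomp Require Import all_boot all_order all_algebra.
From mathcomp Require Import reals.
Set Implicit Arguments. Unset Strict Implicit. Unset Printing Implicit Defensive.
Import Order.TTheory GRing.Theory Num.Theory.
Local Open Scope ring_scope.

Section RiFle.
Variables (R : realType) (n : nat).

(* Agents p_1..p_n and q_1..q_n are both indexed by 'I_n. *)
Record rifle_game := RiFleGame {
  beta : 'I_n -> 'I_n -> R;     (* share prescribed to p_i in pair (p_i,q_j) *)
  gamma : 'I_n -> 'I_n -> R;    (* share prescribed to q_j in pair (p_i,q_j) *)
  rigidP : pred 'I_n;
  rigidQ : pred 'I_n
}.

Variable G : rifle_game.

Definition nonneg_game : Prop :=
  forall i j, 0 <= beta G i j /\ 0 <= gamma G i j.

Definition alpha (i j : 'I_n) : R := beta G i j + gamma G i j.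

Definition rigid_pair (i j : 'I_n) : bool := rigidP G i || rigidQ G j.

Definition is_matching (M : {set 'I_n * 'I_n}) : Prop :=
  forall i j i' j', (i, j) \in M -> (i', j') \in M -> (i = i' <-> j = j').

Record outcome := Outcome {
  ou : {ffun 'I_n -> R};
  ov : {ffun 'I_n -> R};
  om : {set 'I_n * 'I_n}
}.

Definition feasible (x : outcome) : Prop :=
  [/\ (forall i, 0 <= ou x i) /\ (forall j, 0 <= ov x j),
      is_matching (om x),
      (forall i j, (i, j) \in om x -> rigidP G i ->
          ou x i = beta G i j /\ (~~ rigidQ G j -> gamma G i j <= ov x j)),
      (forall i j, (i, j) \in om x -> rigidQ G j ->
          ov x j = gamma G i j /\ (~~ rigidP G i -> beta G i j <= ou x i)) &
      \sum_i ou x i + \sum_j ov x j = \sum_(p in om x) alpha p.1 p.2 ].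

Definition stable (x : outcome) : Prop :=
  feasible x /\
  (forall i j,
     if rigid_pair i j then beta G i j <= ou x i \/ gamma G i j <= ov x j
     else alpha i j <= ou x i + ov x j).

Definition geP (x y : outcome) : Prop :=
  (forall i, ou y i <= ou x i) /\ (forall j, ov x j <= ov y j).

(* Coalitions C = CP (subset of P) \cup CQ (subset of Q). *)
(* Payoff of C is forced under M: every matched pair crossing the boundary of C
   is rigid.  An unmatched agent is matched to a rigid dummy (outside C), so it
   never violates the condition. *)
Definition forced (M : {set 'I_n * 'I_n}) (CP CQ : {set 'I_n}) : Prop :=
  forall i j, (i, j) \in M -> (i \in CP) != (j \in CQ) -> rigid_pair i j.

(* The forced payoff; an unmatched agent in C contributes its reservation
   price, which is 0 in this model. *)
Definition forced_payoff (M : {set 'I_n * 'I_n}) (CP CQ : {set 'I_n}) : R :=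
  \sum_(p in M | p.1 \in CP) beta G p.1 p.2
  + \sum_(p in M | p.2 \in CQ) gamma G p.1 p.2.

Definition nonempty_coalition (CP CQ : {set 'I_n}) : bool :=
  (CP != set0) || (CQ != set0).

Definition proper_subcoalition (CP' CQ' CP CQ : {set 'I_n}) : bool :=
  [&& CP' \subset CP, CQ' \subset CQ & (CP' != CP) || (CQ' != CQ)].

Definition minimal_forced_both (M M' : {set 'I_n * 'I_n}) (CP CQ : {set 'I_n})
  : Prop :=
  [/\ nonempty_coalition CP CQ, forced M CP CQ, forced M' CP CQ &
      forall CP' CQ', nonempty_coalition CP' CQ' ->
        proper_subcoalition CP' CQ' CP CQ ->
        ~ (forced M CP' CQ' /\ forced M' CP' CQ')].

Definition coincide_on (M M' : {set 'I_n * 'I_n}) (CP CQ : {set 'I_n}) : Prop :=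
  (forall i j, i \in CP -> ((i, j) \in M <-> (i, j) \in M')) /\
  (forall i j, j \in CQ -> ((i, j) \in M <-> (i, j) \in M')).

Definition nondegenerate : Prop :=
  forall (M M' : {set 'I_n * 'I_n}) (CP CQ : {set 'I_n}),
    is_matching M -> is_matching M' ->
    minimal_forced_both M M' CP CQ ->
    forced_payoff M CP CQ = forced_payoff M' CP CQ ->
    coincide_on M M' CP CQ.

Definition stable_join (x y z : outcome) : Prop :=
  [/\ stable z, geP z x, geP z y &
      forall w, stable w -> geP w x -> geP w y -> geP w z].

Definition stable_meet (x y z : outcome) : Prop :=
  [/\ stable z, geP x z, geP y z &
      forall w, stable w -> geP x w -> geP y w -> geP z w].

End RiFle.

(* Main.v *)
From HB Require Import structures.
From mathcomp Require Import all_boot all_order all_algebra.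
From mathcomp Require Import reals.
Require Import Defs.
From mathcomp.algebra_tactics Require Import lra.
From Stdlib Require Import Classical.
Set Implicit Arguments. Unset Strict Implicit. Unset Printing Implicit Defensive.
Import Order.TTheory GRing.Theory Num.Theory.
Local Open Scope ring_scope.
Section Sums.
Variables (R : realType) (n : nat).

Definition matchedP (M : {set 'I_n * 'I_n}) i := [exists j, (i, j) \in M].
Definition matchedQ (M : {set 'I_n * 'I_n}) j := [exists i, (i, j) \in M].

Lemma sum_pairs (M : {set 'I_n * 'I_n}) (F : 'I_n * 'I_n -> R) :
  \sum_(p in M) F p = \sum_i \sum_j (if (i, j) \in M then F (i, j) else 0).
Proof.
rewrite (big_mkcond (fun p => p \in M)) pair_big /=.
by apply: eq_bigr => [[i j]] _.
Qed.

Lemma row_sum (M : {set 'I_n * 'I_n}) (Mm : is_matching M) (f : 'I_n -> R) i :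
  \sum_j (if (i, j) \in M then f i else 0) = if matchedP M i then f i else 0.
Proof.
case: (boolP (matchedP M i)) => [/existsP [j0 Hj0]|Hn].
  rewrite (bigD1 j0) //= Hj0 big1 ?addr0 // => j Hj.
  case: ifP => // Hij; have := (Mm _ _ _ _ Hj0 Hij).1 erefl.
  by move=> E; rewrite E eqxx in Hj.
apply: big1 => j _; case: ifP => // Hij.
by move: Hn; rewrite /matchedP => /existsP[]; exists j.
Qed.

Lemma col_sum (M : {set 'I_n * 'I_n}) (Mm : is_matching M) (f : 'I_n -> R) j :
  \sum_i (if (i, j) \in M then f j else 0) = if matchedQ M j then f j else 0.
Proof.
case: (boolP (matchedQ M j)) => [/existsP [i0 Hi0]|Hn].
  rewrite (bigD1 i0) //= Hi0 big1 ?addr0 // => i Hi.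
  case: ifP => // Hij; have := (Mm _ _ _ _ Hi0 Hij).2 erefl.
  by move=> E; rewrite E eqxx in Hi.
apply: big1 => i _; case: ifP => // Hij.
by move: Hn; rewrite /matchedQ => /existsP[]; exists i.
Qed.

Lemma decompP (M : {set 'I_n * 'I_n}) (Mm : is_matching M) (f : 'I_n -> R) :
  \sum_i f i = \sum_(p in M) f p.1 + \sum_(i | ~~ matchedP M i) f i.
Proof.
rewrite sum_pairs.
have -> : \sum_i \sum_j (if (i, j) \in M then f (i, j).1 else 0)
        = \sum_(i | matchedP M i) f i.
  rewrite [RHS]big_mkcond /=; apply: eq_bigr => i _; exact: row_sum.
by rewrite [LHS](bigID (matchedP M)) /=.
Qed.

Lemma decompQ (M : {set 'I_n * 'I_n}) (Mm : is_matching M) (g : 'I_n -> R) :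
  \sum_j g j = \sum_(p in M) g p.2 + \sum_(j | ~~ matchedQ M j) g j.
Proof.
rewrite sum_pairs exchange_big /=.
have -> : \sum_j \sum_i (if (i, j) \in M then g j else 0)
        = \sum_(j | matchedQ M j) g j.
  rewrite [RHS]big_mkcond /=; apply: eq_bigr => j _; exact: col_sum.
by rewrite [LHS](bigID (matchedQ M)) /=.
Qed.

End Sums.
Section Stable.
Variables (R : realType) (n : nat) (G : rifle_game R n).

Lemma stable_match (x : outcome R n) : stable G x -> is_matching (om x).
Proof. by case=> [[]]. Qed.

Lemma stable_nonneg (x : outcome R n) :
  stable G x -> (forall i, 0 <= ou x i) /\ (forall j, 0 <= ov x j).
Proof. by case=> [[]]. Qed.

Lemma stable_ge (x : outcome R n) : stable G x ->
  forall i j, (i, j) \in om x -> alpha G i j <= ou x i + ov x j.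
Proof.
case=> [[[Hu Hv] Mm HP HQ Hsum] Hst] i j Hij.
move: (Hst i j); rewrite /rigid_pair /alpha.
case rP: (rigidP G i) => /= H.
  have [E1 E2] := HP i j Hij rP.
  case rQ: (rigidQ G j).
    have [E3 _] := HQ i j Hij rQ; lra.
  have := E2 (negbT rQ); lra.
case rQ: (rigidQ G j) H => /= H.
  have [E3 E4] := HQ i j Hij rQ; have := E4 (negbT rP); lra.
by [].
Qed.

Lemma stable_exact (x : outcome R n) : stable G x ->
  [/\ forall i j, (i, j) \in om x -> ou x i + ov x j = alpha G i j,
      forall i, ~~ matchedP (om x) i -> ou x i = 0 &
      forall j, ~~ matchedQ (om x) j -> ov x j = 0].
Proof.
move=> Sx; have Mm := stable_match Sx; have [Hu Hv] := stable_nonneg Sx.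
have Hge := stable_ge Sx.
case: Sx => [[_ _ _ _ Hsum] _].
rewrite (decompP Mm) (decompQ Mm (ov x)) in Hsum.
set A := \sum_(p in om x) (ou x p.1 + ov x p.2 - alpha G p.1 p.2).
have HA : A = \sum_(p in om x) ou x p.1 + \sum_(p in om x) ov x p.2
              - \sum_(p in om x) alpha G p.1 p.2.
  by rewrite /A sumrB big_split.
have A0 : 0 <= A.
  by apply: sumr_ge0 => [[i j]] /= Hij; have := Hge _ _ Hij; lra.
have B0 : 0 <= \sum_(i | ~~ matchedP (om x) i) ou x i by apply: sumr_ge0.
have C0 : 0 <= \sum_(j | ~~ matchedQ (om x) j) ov x j by apply: sumr_ge0.
have A00 : A = 0 by lra.
have B00 : \sum_(i | ~~ matchedP (om x) i) ou x i = 0 by lra.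
have C00 : \sum_(j | ~~ matchedQ (om x) j) ov x j = 0 by lra.
split.
- move=> i j Hij.
  have G0 : forall p, p \in om x -> 0 <= ou x p.1 + ov x p.2 - alpha G p.1 p.2.
    by move=> [i' j'] /= H'; have := Hge _ _ H'; lra.
  have := psumr_eq0P G0 A00 Hij => /= H; lra.
- by move=> i Hi; apply: (psumr_eq0P _ B00) => // k _; apply: Hu.
- by move=> j Hj; apply: (psumr_eq0P _ C00) => // k _; apply: Hv.
Qed.

Lemma stable_rigid (x : outcome R n) : stable G x ->
  forall i j, (i, j) \in om x -> rigid_pair G i j ->
  ou x i = beta G i j /\ ov x j = gamma G i j.
Proof.
move=> Sx i j Hij; have [E _ _] := stable_exact Sx.
have := E i j Hij; rewrite /alpha.
case: Sx => [[_ _ HP HQ _] _]; rewrite /rigid_pair.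
case rP: (rigidP G i) => /= H.
  have [E1 _] := HP i j Hij rP; split => //; lra.
move=> rQ; have [E1 _] := HQ i j Hij rQ; split => //; lra.
Qed.

Lemma sum_exact (M : {set 'I_n * 'I_n}) (f g : 'I_n -> R) :
  is_matching M ->
  (forall i j, (i, j) \in M -> f i + g j = alpha G i j) ->
  (forall i, ~~ matchedP M i -> f i = 0) ->
  (forall j, ~~ matchedQ M j -> g j = 0) ->
  \sum_i f i + \sum_j g j = \sum_(p in M) alpha G p.1 p.2.
Proof.
move=> Mm Hp Hi Hj.
have Z1 : \sum_(i | ~~ matchedP M i) f i = 0 by apply: big1.
have Z2 : \sum_(j | ~~ matchedQ M j) g j = 0 by apply: big1.
rewrite (decompP Mm) (decompQ Mm g) Z1 Z2 !addr0.
rewrite -big_split /=; apply: eq_bigr => [[i j]] /= Hij; exact: Hp.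
Qed.

End Stable.
Section Tie.
Variables (R : realType) (n : nat) (G : rifle_game R n).

Lemma forced_payoff_eq (x : outcome R n) CP CQ : stable G x ->
  forced G (om x) CP CQ ->
  forced_payoff G (om x) CP CQ = \sum_(i in CP) ou x i + \sum_(j in CQ) ov x j.
Proof.
move=> Sx Hf; have Mm := stable_match Sx; have [E1 E2 E3] := stable_exact Sx.
rewrite /forced_payoff !big_mkcondr.
have HP : \sum_(i in CP) ou x i =
          \sum_(p in om x) (if p.1 \in CP then ou x p.1 else 0).
  rewrite big_mkcond (decompP Mm (fun i => if i \in CP then ou x i else 0)) /=.
  have Z : \sum_(i | ~~ matchedP (om x) i) (if i \in CP then ou x i else 0) = 0.
    by apply: big1 => i Hi; rewrite E2 // if_same.
  by rewrite Z addr0.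
have HQ : \sum_(j in CQ) ov x j =
          \sum_(p in om x) (if p.2 \in CQ then ov x p.2 else 0).
  rewrite big_mkcond (decompQ Mm (fun j => if j \in CQ then ov x j else 0)) /=.
  have Z : \sum_(j | ~~ matchedQ (om x) j) (if j \in CQ then ov x j else 0) = 0.
    by apply: big1 => j Hj; rewrite E3 // if_same.
  by rewrite Z addr0.
rewrite HP HQ -!big_split; apply: eq_bigr => [[i j]] /= Hij.
case rij: (rigid_pair G i j).
  by have [-> ->] := stable_rigid Sx Hij rij.
have Heq : (i \in CP) = (j \in CQ).
  by apply/eqP; apply: contraFT rij => H; apply: Hf.
have := E1 i j Hij; rewrite /alpha Heq.
by case: (j \in CQ) => H; [lra | rewrite addr0].
Qed.

Lemma exists_minimal (M M' : {set 'I_n * 'I_n}) CP CQ :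
  nonempty_coalition CP CQ -> forced G M CP CQ -> forced G M' CP CQ ->
  exists CP' CQ' : {set 'I_n}, [/\ CP' \subset CP, CQ' \subset CQ &
                      minimal_forced_both G M M' CP' CQ'].
Proof.
have [k Hk] : exists k, (#|CP| + #|CQ| < k)%N by exists (#|CP| + #|CQ|).+1.
elim: k CP CQ Hk => // k IH CP CQ Hk Hne HF HF'.
case: (classic (forall CP' CQ' : {set 'I_n}, nonempty_coalition CP' CQ' ->
        proper_subcoalition CP' CQ' CP CQ ->
        ~ (forced G M CP' CQ' /\ forced G M' CP' CQ'))) => Hmin.
  by exists CP, CQ; split.
have [CP' H1] := not_all_ex_not _ _ Hmin.
have [CQ' H2] := not_all_ex_not _ _ H1.
have [Hne' H3] := imply_to_and _ _ H2.
have [Hpr H4] := imply_to_and _ _ H3.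
have [HF1 HF2] := NNPP _ H4.
move: Hpr => /and3P [S1 S2 S3].
have Hk' : (#|CP'| + #|CQ'| < k)%N.
  have L1 := subset_leq_card S1; have L2 := subset_leq_card S2.
  case/orP: S3 => D.
    have : CP' \proper CP by rewrite properEneq D S1.
    move/proper_card => L3; rewrite ltnS in Hk.
    by apply: (leq_trans _ Hk); rewrite -addSn leq_add.
  have : CQ' \proper CQ by rewrite properEneq D S2.
  move/proper_card => L3; rewrite ltnS in Hk.
  by apply: (leq_trans _ Hk); rewrite -addnS leq_add.
have [CP'' [CQ'' [T1 T2 T3]]] := IH CP' CQ' Hk' Hne' HF1 HF2.
exists CP'', CQ''; split => //; apply: subset_trans; eassumption.
Qed.

Lemma tie (x y : outcome R n) CP CQ : stable G x -> stable G y ->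
  nondegenerate G -> nonempty_coalition CP CQ ->
  forced G (om x) CP CQ -> forced G (om y) CP CQ ->
  (forall i, i \in CP -> ou x i = ou y i) ->
  (forall j, j \in CQ -> ov x j = ov y j) ->
  (exists2 i, i \in CP & forall j, (i, j) \in om x <-> (i, j) \in om y) \/
  (exists2 j, j \in CQ & forall i, (i, j) \in om x <-> (i, j) \in om y).
Proof.
move=> Sx Sy ND Hne HF HF' EP EQ.
have [CP' [CQ' [S1 S2 Hm]]] := exists_minimal Hne HF HF'.
case: (Hm) => Hne' HF1 HF2 _.
have Hfp : forced_payoff G (om x) CP' CQ' = forced_payoff G (om y) CP' CQ'.
  rewrite (forced_payoff_eq Sx HF1) (forced_payoff_eq Sy HF2).
  congr (_ + _); apply: eq_bigr => a Ha.
    by apply: EP; apply: (subsetP S1).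
  by apply: EQ; apply: (subsetP S2).
have [C1 C2] := ND _ _ _ _ (stable_match Sx) (stable_match Sy) Hm Hfp.
case/orP: Hne' => /set0Pn [a Ha].
  by left; exists a; [apply: (subsetP S1) | move=> j; apply: C1].
by right; exists a; [apply: (subsetP S2) | move=> i; apply: C2].
Qed.

End Tie.
Section Lfp.
Variables (A : finType) (Z : {set A}) (r : rel A) (T : {set A}).

Definition rulesb (S : {set A}) : bool :=
  [forall a, forall b, ((a \in Z) && r a b && ((b \in T) || (b \in S))) ==> (a \in S)].

Definition lfp : {set A} := [set a | [forall S : {set A}, rulesb S ==> (a \in S)]].

Lemma lfp_min S : rulesb S -> lfp \subset S.
Proof. by move=> HS; apply/subsetP => a; rewrite inE => /forallP/(_ S)/implyP; apply. Qed.

Lemma lfp_rule a b : a \in Z -> r a b -> (b \in T) || (b \in lfp) -> a \in lfp.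
Proof.
move=> Ha Hab Hb; rewrite inE; apply/forallP => S; apply/implyP => HS.
move/forallP: (HS) => /(_ a) /forallP /(_ b) /implyP; apply.
rewrite Ha Hab /=; case/orP: Hb => [->//|Hb]; apply/orP; right.
exact: (subsetP (lfp_min HS)).
Qed.

Lemma lfp_inv a : a \in lfp -> a \in Z /\ exists2 b, r a b & (b \in T) || (b \in lfp).
Proof.
pose S0 := [set a | (a \in Z) && [exists b, r a b && ((b \in T) || (b \in lfp))]].
have HS0 : rulesb S0.
  apply/forallP => a'; apply/forallP => b; apply/implyP => /andP [/andP [Ha Hab] Hb].
  rewrite inE Ha /=; apply/existsP; exists b; rewrite Hab /=.
  case/orP: Hb => [->//|]; rewrite inE => /andP [Hb /existsP [c /andP [Hbc Hc]]].
  by apply/orP; right; apply: (lfp_rule Hb Hbc).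
move=> Ha; have := subsetP (lfp_min HS0) a Ha; rewrite inE => /andP [-> /existsP [b /andP [H1 H2]]].
by split => //; exists b.
Qed.

Lemma lfp_sub : lfp \subset Z.
Proof. by apply/subsetP => a /lfp_inv []. Qed.

End Lfp.
Lemma trich (R : realType) (r : R) : [\/ r < 0, r = 0 | 0 < r].
Proof. by case: (ltrgtP r 0) => H; [constructor 1|constructor 3|constructor 2]. Qed.

Section Core.
Variables (R : realType) (n : nat) (G : rifle_game R n).
Variables (x y : outcome R n).
Hypotheses (Sx : stable G x) (Sy : stable G y) (ND : nondegenerate G).

Local Notation agent := ('I_n + 'I_n)%type.

Definition dd (a : agent) : R :=
  match a with inl i => ou x i - ou y i | inr j => ov y j - ov x j end.

Definition succ (a b : agent) : bool :=
  match a, b with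
  | inl i, inr j => (i, j) \in om x
  | inr j, inl i => (i, j) \in om y
  | _, _ => false end.

Definition edgeR (a b : agent) : bool :=
  match a, b with
  | inl i, inr j => rigid_pair G i j
  | inr j, inl i => rigid_pair G i j
  | _, _ => true end.

Definition coinc (a : agent) : bool :=
  match a with
  | inl i => [forall j, ((i, j) \in om x) == ((i, j) \in om y)]
  | inr j => [forall i, ((i, j) \in om x) == ((i, j) \in om y)] end.

Let Mx := stable_match Sx.
Let My := stable_match Sy.

Lemma succ_fun a b b' : succ a b -> succ a b' -> b = b'.
Proof.
case: a b b' => [i|j] [i1|j1] [i2|j2] //= H1 H2.
  by rewrite ((Mx H1 H2).1 erefl).
by rewrite ((My H1 H2).2 erefl).
Qed.

Lemma succ_inj a a' b : succ a b -> succ a' b -> a = a'.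
Proof.
case: a a' b => [i|j] [i1|j1] [i2|j2] //= H1 H2.
  by rewrite ((Mx H1 H2).2 erefl).
by rewrite ((My H1 H2).1 erefl).
Qed.

Lemma stab (z : outcome R n) i j : stable G z ->
  if rigid_pair G i j then beta G i j <= ou z i \/ gamma G i j <= ov z j
  else alpha G i j <= ou z i + ov z j.
Proof. by case=> _; apply. Qed.

Lemma succ_flex a b : succ a b -> ~~ edgeR a b -> dd a <= dd b.
Proof.
case: a b => [i|j] [i1|j1] //= H /negbTE Hr.
  have [E _ _] := stable_exact Sx; have := E _ _ H.
  have := stab i j1 Sy; rewrite Hr; lra.
have [E _ _] := stable_exact Sy; have := E _ _ H.
have := stab i1 j Sx; rewrite Hr; lra.
Qed.

Lemma succ_rigid a b : succ a b -> edgeR a b -> 0 < dd a -> dd b < 0 -> False.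
Proof.
case: a b => [i|j] [i1|j1] //= H Hr.
  have [E1 E2] := stable_rigid Sx H Hr.
  have := stab i j1 Sy; rewrite Hr; lra.
have [E1 E2] := stable_rigid Sy H Hr.
have := stab i1 j Sx; rewrite Hr; lra.
Qed.

Lemma succ_pos a b : succ a b -> 0 < dd a -> 0 <= dd b.
Proof.
move=> H Ha; case E: (edgeR a b).
  by rewrite leNgt; apply/negP => Hb; apply: (succ_rigid H E Ha Hb).
have := succ_flex H (negbT E); lra.
Qed.

Lemma succ_neg a b : succ a b -> dd b < 0 -> dd a <= 0.
Proof.
move=> H Hb; case E: (edgeR a b).
  by rewrite leNgt; apply/negP => Ha; apply: (succ_rigid H E Ha Hb).
have := succ_flex H (negbT E); lra.
Qed.

Lemma pos_succ a : 0 < dd a -> exists b, succ a b.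
Proof.
have [_ E2 _] := stable_exact Sx; have [_ _ E3] := stable_exact Sy.
have [Hu Hv] := stable_nonneg Sx; have [Hu' Hv'] := stable_nonneg Sy.
case: a => [i|j] /= H.
  case: (boolP (matchedP (om x) i)) => [/existsP [j Hj]|Hn].
    by exists (inr j).
  have := E2 _ Hn; have := Hu' i; lra.
case: (boolP (matchedQ (om y) j)) => [/existsP [i Hi]|Hn].
  by exists (inl i).
have := E3 _ Hn; have := Hv j; lra.
Qed.

Lemma edgeR_sym a b : edgeR a b = edgeR b a.
Proof. by case: a b => [i|j] [i1|j1]. Qed.

Lemma double a b : succ a b -> succ b a -> dd a = dd b.
Proof.
move=> H1 H2; case E: (edgeR a b).
  case: a b H1 H2 E => [i|j] [i1|j1] //= H1 H2 E.
    have [E1 E2] := stable_rigid Sx H1 E; have [E3 E4] := stable_rigid Sy H2 E; lra.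
  have [E1 E2] := stable_rigid Sx H2 E; have [E3 E4] := stable_rigid Sy H1 E; lra.
have := succ_flex H1 (negbT E); have := succ_flex H2; rewrite edgeR_sym E => /(_ erefl).
lra.
Qed.

Lemma coinc_succ a b : coinc a -> succ a b -> succ b a.
Proof.
case: a b => [i|j] [i1|j1] //= /forallP H Hs.
  by move: (H j1); rewrite Hs => /eqP <-.
by move: (H i1); rewrite Hs => /eqP ->.
Qed.

Lemma coinc_pred a b : coinc b -> succ a b -> succ b a.
Proof.
case: a b => [i|j] [i1|j1] //= /forallP H Hs.
  by move: (H i); rewrite Hs => /eqP <-.
by move: (H j); rewrite Hs => /eqP ->.
Qed.

Lemma succ2_coinc a b : succ a b -> succ b a -> coinc a.
Proof.
case: a b => [i|j] [i1|j1] //= H1 H2; apply/forallP => k; apply/eqP.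
  case E1: ((i, k) \in om x); case E2: ((i, k) \in om y) => //.
    by move: E2; rewrite -((Mx H1 E1).1 erefl) H2.
  by move: E1; rewrite -((My H2 E2).1 erefl) H1.
case E1: ((k, j) \in om x); case E2: ((k, j) \in om y) => //.
  by move: E2; rewrite -((Mx H2 E1).2 erefl) H1.
by move: E1; rewrite -((My H1 E2).2 erefl) H2.
Qed.

Definition Zer : {set agent} := [set a | dd a == 0].
Definition Pos : {set agent} := [set a | 0 < dd a].
Definition Neg : {set agent} := [set a | dd a < 0].

Lemma tie_agents (C : {set agent}) : C \subset Zer -> C != set0 ->
  (forall a b, succ a b -> (a \in C) != (b \in C) -> edgeR a b) ->
  exists2 a, a \in C & coinc a.
Proof.
move=> HZ Hne HE.
pose CP := [set i | inl i \in C]; pose CQ := [set j | inr j \in C].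
have Hne' : nonempty_coalition CP CQ.
  case/set0Pn: Hne => [[i|j] Ha]; apply/orP; [left|right]; apply/set0Pn.
    by exists i; rewrite inE.
  by exists j; rewrite inE.
have HF : forced G (om x) CP CQ.
  move=> i j Hij; rewrite !inE => Hd; exact: (HE (inl i) (inr j)).
have HF' : forced G (om y) CP CQ.
  move=> i j Hij; rewrite !inE eq_sym => Hd; exact: (HE (inr j) (inl i)).
have EP : forall i, i \in CP -> ou x i = ou y i.
  move=> i; rewrite inE => /(subsetP HZ); rewrite inE /= => /eqP; lra.
have EQ : forall j, j \in CQ -> ov x j = ov y j.
  move=> j; rewrite inE => /(subsetP HZ); rewrite inE /= => /eqP; lra.
case: (tie Sx Sy ND Hne' HF HF' EP EQ) => [[i Hi Hc]|[j Hj Hc]].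
  exists (inl i); first by move: Hi; rewrite inE.
  by apply/forallP => k; apply/eqP; apply/idP/idP => /Hc.
exists (inr j); first by move: Hj; rewrite inE.
by apply/forallP => k; apply/eqP; apply/idP/idP => /Hc.
Qed.

Definition Rp := lfp Zer succ Pos.
Definition Lm := lfp Zer [rel a b | succ b a] Neg.

Lemma claimK a z : a \in Pos -> succ a z -> z \in Zer -> z \in Rp.
Proof.
move=> Ha Haz Hz; apply: contraT => HzR.
pose C := [set w | [&& w \in Zer, w \notin Rp, w \notin Lm & ~~ coinc w]].
have HaP : 0 < dd a by move: Ha; rewrite inE.
have ZP w : w \in Zer -> dd w = 0 by rewrite inE => /eqP.
have RZ w : w \in Rp -> w \in Zer by move/(subsetP (lfp_sub _ _ _)).
have LZ w : w \in Lm -> w \in Zer by move/(subsetP (lfp_sub _ _ _)).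
have zC : z \in C.
  rewrite inE Hz HzR /=; apply/andP; split.
    apply/negP => /lfp_inv [_ [c /= Hcz Hc]].
    have Eca := succ_inj Hcz Haz; subst c.
    case/orP: Hc => [|/LZ]; rewrite inE; [lra|move/eqP; lra].
  apply/negP => Hcz; have := double Haz (coinc_pred Hcz Haz).
  have := ZP _ Hz; lra.
have Hsub : C \subset Zer by apply/subsetP => w; rewrite inE => /and4P [].
have Hne : C != set0 by apply/set0Pn; exists z.
have HE : forall a b, succ a b -> (a \in C) != (b \in C) -> edgeR a b.
  move=> u w Huw; case Cu: (u \in C); case Cw: (w \in C) => //= _.
    move: Cu; rewrite inE => /and4P [Zu Ru Lu Cou].
    have du := ZP _ Zu.
    case: (trich (dd w)) => Hw.
    - case E: (edgeR u w) => //; have := succ_flex Huw (negbT E); lra.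
    - have Zw : w \in Zer by rewrite inE Hw.
      move: Cw; rewrite inE Zw /=; case Rw: (w \in Rp) => /=.
        have : u \in Rp by apply: (lfp_rule Zu Huw); rewrite Rw orbT.
        by rewrite (negbTE Ru).
      case Lw: (w \in Lm) => /=.
        case/lfp_inv: Lw => _ [c /= Hcw Hc].
        have Ecu := succ_inj Hcw Huw; subst c.
        case/orP: Hc => [|]; [rewrite inE; lra|by rewrite (negbTE Lu)].
      move/negbFE => Cw.
      by move: Cou; rewrite (succ2_coinc Huw (coinc_pred Cw Huw)).
    - have : u \in Rp by apply: (lfp_rule Zu Huw); rewrite inE Hw.
      by rewrite (negbTE Ru).
  move: Cw; rewrite inE => /and4P [Zw Rw Lw Cow].
  have dw := ZP _ Zw.
  case: (trich (dd u)) => Hu.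
  - have : w \in Lm by apply: (lfp_rule (r := [rel a b | succ b a]) Zw Huw); rewrite inE Hu.
    by rewrite (negbTE Lw).
  - have Zu : u \in Zer by rewrite inE Hu.
    move: Cu; rewrite inE Zu /=; case Ru: (u \in Rp) => /=.
      case/lfp_inv: Ru => _ [c Huc Hc].
      have Ecw := succ_fun Huc Huw; subst c.
      case/orP: Hc => [|]; [rewrite inE; lra|by rewrite (negbTE Rw)].
    case Lu: (u \in Lm) => /=.
      have : w \in Lm by apply: (lfp_rule (r := [rel a b | succ b a]) Zw Huw); rewrite Lu orbT.
      by rewrite (negbTE Lw).
    move/negbFE => Cu.
    by move: Cow; rewrite (succ2_coinc (coinc_succ Cu Huw) Huw).
  - case E: (edgeR u w) => //; have := succ_flex Huw (negbT E); lra.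
have [w Hw Hcw] := tie_agents Hsub Hne HE.
by move: Hw; rewrite inE Hcw /= !andbF.
Qed.


Definition Xs : {set agent} := Pos :|: Rp.

Lemma X1 a : a \in Xs -> exists2 b, succ a b & b \in Xs.
Proof.
rewrite inE => /orP [Ha|Ha].
  have HaP : 0 < dd a by move: Ha; rewrite inE.
  have [b Hb] := pos_succ HaP; exists b => //.
  have := succ_pos Hb HaP; case: (trich (dd b)) => Hd; first lra.
    move=> _; rewrite inE; apply/orP; right; apply: (claimK Ha Hb).
    by rewrite inE Hd.
  by move=> _; rewrite inE inE Hd.
case/lfp_inv: (Ha) => _ [b Hab Hb]; exists b => //.
by rewrite inE.
Qed.

Definition fs (a : agent) : agent := odflt a [pick b | succ a b].

Lemma fsP a : a \in Xs -> succ a (fs a) /\ fs a \in Xs.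
Proof.
move=> Ha; have [b Hab Hb] := X1 Ha; rewrite /fs.
case: pickP => [c Hc|/(_ b)]; last by rewrite Hab.
by rewrite /= -(succ_fun Hab Hc).
Qed.

Lemma X2 b : b \in Xs -> exists2 a, succ a b & a \in Xs.
Proof.
move=> Hb.
have Hinj : {in Xs &, injective fs}.
  move=> a1 a2 H1 H2 E; have [S1 _] := fsP H1; have [S2 _] := fsP H2.
  by rewrite E in S1; apply: succ_inj S1 S2.
have Hsub : fs @: Xs \subset Xs.
  by apply/subsetP => c /imsetP [a Ha ->]; have [_ ->] := fsP Ha.
have Heq : fs @: Xs = Xs.
  by apply/eqP; rewrite eqEcard Hsub (card_in_imset Hinj) leqnn.
have : b \in fs @: Xs by rewrite Heq.
case/imsetP => a Ha ->.
by exists a; have [] := fsP Ha.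
Qed.

Lemma Xs_closed a b : succ a b -> (a \in Xs) = (b \in Xs).
Proof.
move=> Hab; apply/idP/idP => H.
  by have [c Hc Hc'] := X1 H; rewrite (succ_fun Hab Hc).
by have [c Hc Hc'] := X2 H; rewrite (succ_inj Hab Hc).
Qed.

Lemma Xs_sign a : (a \in Xs -> 0 <= dd a) /\ (a \notin Xs -> dd a <= 0).
Proof.
split.
  rewrite inE => /orP [|/(subsetP (lfp_sub _ _ _))]; rewrite inE; [lra|by move/eqP ->].
rewrite inE negb_or inE => /andP [H _]; by rewrite leNgt.
Qed.

End Core.

Lemma core (R : realType) (n : nat) (G : rifle_game R n) (x y : outcome R n) :
  stable G x -> stable G y -> nondegenerate G ->
  exists X : {set 'I_n + 'I_n},
  ((forall i j, (i, j) \in om x -> (inl i \in X) = (inr j \in X)) /\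
      (forall i j, (i, j) \in om y -> (inl i \in X) = (inr j \in X))) /\
  [/\ forall i, inl i \in X -> ou y i <= ou x i,
      forall i, inl i \notin X -> ou x i <= ou y i,
      forall j, inr j \in X -> ov x j <= ov y j &
      forall j, inr j \notin X -> ov y j <= ov x j].
Proof.
move=> Sx Sy ND; exists (Xs x y); split; [split|split].
- by move=> i j H; apply: (Xs_closed Sx Sy ND (a := inl i) (b := inr j)).
- by move=> i j H; symmetry; apply: (Xs_closed Sx Sy ND (a := inr j) (b := inl i)).
- by move=> i /(Xs_sign x y (inl i)).1 /=; lra.
- by move=> i /(Xs_sign x y (inl i)).2 /=; lra.
- by move=> j /(Xs_sign x y (inr j)).1 /=; lra.
- by move=> j /(Xs_sign x y (inr j)).2 /=; lra.
Qed.

Section Arith.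
Variable R : realType.
Implicit Types a b c d e f : R.

Lemma max_cases a b : (Num.max a b = a /\ b <= a) \/ (Num.max a b = b /\ a <= b).
Proof. by case: (leP a b) => H; [right | left; split => //; apply: ltW]. Qed.

Lemma min_cases a b : (Num.min a b = a /\ a <= b) \/ (Num.min a b = b /\ b <= a).
Proof. by case: (leP a b) => H; [left | right; split => //; apply: ltW]. Qed.

Lemma join_flex al a b c d : al <= a + c -> al <= b + d -> al <= Num.max a b + Num.min c d.
Proof. by move=> H1 H2; case: (max_cases a b) => [[-> ?]|[-> ?]]; case: (min_cases c d) => [[-> ?]|[-> ?]]; lra. Qed.

Lemma join_rig be ga a b c d : be <= a \/ ga <= c -> be <= b \/ ga <= d ->
  be <= Num.max a b \/ ga <= Num.min c d.
Proof.
by move=> H1 H2; case: (max_cases a b) => [[-> ?]|[-> ?]]; case: (min_cases c d) => [[-> ?]|[-> ?]]; lra.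
Qed.

Lemma meet_flex al a b c d : al <= a + c -> al <= b + d -> al <= Num.min a b + Num.max c d.
Proof. by move=> H1 H2; case: (min_cases a b) => [[-> ?]|[-> ?]]; case: (max_cases c d) => [[-> ?]|[-> ?]]; lra. Qed.

Lemma meet_rig be ga a b c d : be <= a \/ ga <= c -> be <= b \/ ga <= d ->
  be <= Num.min a b \/ ga <= Num.max c d.
Proof.
by move=> H1 H2; case: (min_cases a b) => [[-> ?]|[-> ?]]; case: (max_cases c d) => [[-> ?]|[-> ?]]; lra.
Qed.

End Arith.

Section Build.
Variables (R : realType) (n : nat) (G : rifle_game R n).

Lemma build (x y : outcome R n) (X : {set 'I_n + 'I_n}) :
  stable G x -> stable G y ->
  (forall i j, (i, j) \in om x -> (inl i \in X) = (inr j \in X)) ->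
  (forall i j, (i, j) \in om y -> (inl i \in X) = (inr j \in X)) ->
  forall U V : {ffun 'I_n -> R},
  (forall i, U i = if inl i \in X then ou x i else ou y i) ->
  (forall j, V j = if inr j \in X then ov x j else ov y j) ->
  feasible G (Outcome U V [set p | ((p \in om x) && (inl p.1 \in X)) ||
                                   ((p \in om y) && (inl p.1 \notin X))]).
Proof.
move=> Sx Sy C1 C2 U V HU HV.
set MJ := [set p | _].
have Mx := stable_match Sx; have My := stable_match Sy.
have [Hux Hvx] := stable_nonneg Sx; have [Huy Hvy] := stable_nonneg Sy.
have [Ex1 Ex2 Ex3] := stable_exact Sx; have [Ey1 Ey2 Ey3] := stable_exact Sy.
have mem i j : (i, j) \in MJ =
   ((i, j) \in om x) && (inl i \in X) || ((i, j) \in om y) && (inl i \notin X).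
  by rewrite inE.
have MJm : is_matching MJ.
  move=> i j i' j'; rewrite !mem.
  case/orP => /andP [H1 X1]; case/orP => /andP [H2 X2].
  - exact: Mx.
  - have X1' : inr j \in X by rewrite -(C1 _ _ H1).
    have X2' : inr j' \notin X by rewrite -(C2 _ _ H2).
    by split => E; subst; [rewrite X1 in X2|rewrite X1' in X2'].
  - have X1' : inr j \notin X by rewrite -(C2 _ _ H1).
    have X2' : inr j' \in X by rewrite -(C1 _ _ H2).
    by split => E; subst; [rewrite X2 in X1|rewrite X2' in X1'].
  - exact: My.
case: Sx => [[_ _ HPx HQx _] _]; case: Sy => [[_ _ HPy HQy _] _].
split.
- by split => [i|j]; [rewrite HU; case: ifP | rewrite HV; case: ifP].
- exact: MJm.
- move=> i j; rewrite mem /= => /orP [] /andP [H Xi].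
    by rewrite HU HV Xi -(C1 _ _ H) Xi; apply: HPx.
  by rewrite HU HV (negbTE Xi) -(C2 _ _ H) (negbTE Xi); apply: HPy.
- move=> i j; rewrite mem /= => /orP [] /andP [H Xi].
    by rewrite HU HV Xi -(C1 _ _ H) Xi; apply: HQx.
  by rewrite HU HV (negbTE Xi) -(C2 _ _ H) (negbTE Xi); apply: HQy.
- apply: sum_exact => //.
  + move=> i j; rewrite mem => /orP [] /andP [H Xi].
      by rewrite HU HV Xi -(C1 _ _ H) Xi; apply: Ex1.
    by rewrite HU HV (negbTE Xi) -(C2 _ _ H) (negbTE Xi); apply: Ey1.
  + move=> i Hi; rewrite HU; case: ifP => Xi.
      apply: Ex2; apply/negP => /existsP [j Hj]; move/negP: Hi; apply.
      by apply/existsP; exists j; rewrite mem Hj Xi.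
    apply: Ey2; apply/negP => /existsP [j Hj]; move/negP: Hi; apply.
    by apply/existsP; exists j; rewrite mem Hj Xi andbF.
  + move=> j Hj; rewrite HV; case: ifP => Xj.
      apply: Ex3; apply/negP => /existsP [i Hi]; move/negP: Hj; apply.
      by apply/existsP; exists i; rewrite mem Hi (C1 _ _ Hi) Xj.
    apply: Ey3; apply/negP => /existsP [i Hi]; move/negP: Hj; apply.
    by apply/existsP; exists i; rewrite mem Hi (C2 _ _ Hi) Xj andbF.
Qed.

End Build.

Theorem theorem2 (R : realType) (n : nat) (G : rifle_game R n) :
  nonneg_game G -> nondegenerate G ->
  forall x y : outcome R n, stable G x -> stable G y ->
    (exists z, stable_join G x y z) /\ (exists z, stable_meet G x y z).
Proof.
move=> _ ND x y Sx Sy.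
have [X [[C1 C2] [s1 s2 s3 s4]]] := core Sx Sy ND.
split.
  pose U := [ffun i => Num.max (ou x i) (ou y i)].
  pose V := [ffun j => Num.min (ov x j) (ov y j)].
  exists (Outcome U V [set p | ((p \in om x) && (inl p.1 \in X)) ||
                                   ((p \in om y) && (inl p.1 \notin X))]).
  have Sz : stable G (Outcome U V [set p | ((p \in om x) && (inl p.1 \in X)) ||
                                   ((p \in om y) && (inl p.1 \notin X))]).
    split.
      apply: build => //.
        move=> i; rewrite ffunE; case: ifP => H.
          by rewrite max_l // s1 // H.
        by rewrite max_r // s2 // H.
      move=> j; rewrite ffunE; case: ifP => H.
        by rewrite min_l // s3 // H.
      by rewrite min_r // s4 // H.
    move=> i j /=; rewrite !ffunE.
    have := stab i j Sx; have := stab i j Sy.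
    case: ifP => _ H1 H2; [exact: join_rig H2 H1 | exact: join_flex H2 H1].
  split => //.
  - by split => [i|j] /=; rewrite ffunE; [rewrite le_max lexx | rewrite ge_min lexx].
  - by split => [i|j] /=; rewrite ffunE; [rewrite le_max lexx orbT | rewrite ge_min lexx orbT].
  - move=> w _ [Hw1 Hw2] [Hw3 Hw4]; split => [i|j] /=; rewrite ffunE.
      by rewrite ge_max Hw1 Hw3.
    by rewrite le_min Hw2 Hw4.
pose U := [ffun i => Num.min (ou x i) (ou y i)].
pose V := [ffun j => Num.max (ov x j) (ov y j)].
exists (Outcome U V [set p | ((p \in om y) && (inl p.1 \in X)) ||
                                 ((p \in om x) && (inl p.1 \notin X))]).
have Sz : stable G (Outcome U V [set p | ((p \in om y) && (inl p.1 \in X)) ||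
                                 ((p \in om x) && (inl p.1 \notin X))]).
  split.
    apply: build => //.
      move=> i; rewrite ffunE; case: ifP => H.
        by rewrite min_r // s1 // H.
      by rewrite min_l // s2 // H.
    move=> j; rewrite ffunE; case: ifP => H.
      by rewrite max_r // s3 // H.
    by rewrite max_l // s4 // H.
  move=> i j /=; rewrite !ffunE.
  have := stab i j Sx; have := stab i j Sy.
  case: ifP => _ H1 H2; [exact: meet_rig H2 H1 | exact: meet_flex H2 H1].
split => //.
- by split => [i|j] /=; rewrite ffunE; [rewrite ge_min lexx | rewrite le_max lexx].
- by split => [i|j] /=; rewrite ffunE; [rewrite ge_min lexx orbT | rewrite le_max lexx orbT].
- move=> w _ [Hw1 Hw2] [Hw3 Hw4]; split => [i|j] /=; rewrite ffunE.
    by rewrite le_min Hw1 Hw3.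
  by rewrite ge_max Hw2 Hw4.
Qed.
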